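(* Let $t,m,r$ be positive integers with $r\geq 2$. If $r(3r-1)$ is not equal to $(mk^{2}-(m-2)k)t$ for any positive integer $k$, then there exists an integer $n$ with $2r-1\le n\le \frac{r(3r-1)}{2}$ such that $p_{mt,t}(n)$ is odd.
   Context: A partition $\lambda$ of a non-negative integer $n$ is a non-increasing sequence of positive integers (its parts) summing to $n$. For positive integers $A$ and $a$, $\mathrm{mex}_{A,a}(\lambda)$ denotes the smallest positive integer congruent to $a$ modulo $A$ that is not a part of $\lambda$. Then $p_{A,a}(n)$ denotes the number of partitions $\lambda$ of $n$ satisfying $\mathrm{mex}_{A,a}(\lambda)\equiv a \pmod{2A}$. *)

(* Defs.v *)
From mathcomp Require Import all_boot all_order all_algebra.
Set Implicit Arguments. Unset Strict Implicit. Unset Printing Implicit Defensive.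

Definition is_partition (n : nat) (s : seq nat) : bool :=
  [&& sorted geq s, all (fun x => 0 < x) s & sumn s == n].

(* A finite list of candidate sequences containing every partition of n:
   all sequences of length <= n with entries in {0,...,n}
   (a partition of n has at most n parts, each at most n). *)
Definition cands (n : nat) : seq (seq nat) :=
  flatten [seq [seq map (@nat_of_ord _) (tval t) | t : k.-tuple 'I_n.+1]
          | k <- iota 0 n.+1].

(* mex_{A,a}(s): the smallest positive integer congruent to a mod A that is not
   a part of s.  Among a, a+A, ..., a+A*(size s).+1 (all <= the search bound)
   at least one is not a part of s, so the first element of this increasing
   filtered list is exactly the mex (for A > 0). *)
Definition mex (A a : nat) (s : seq nat) : nat :=
  head 0 [seq j <- iota 1 (a + A * (size s).+1) |
            (j == a %[mod A]) && (j \notin s)].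

Definition p (A a n : nat) : nat :=
  size (undup [seq s <- cands n |
                 is_partition n s && (mex A a s == a %[mod A.*2])]).

(* Main.v *)
Require Import Defs.
From mathcomp Require Import all_boot all_order all_algebra.
From mathcomp Require Import zify.
Import GRing.Theory Num.Theory.
Set Implicit Arguments. Unset Strict Implicit. Unset Printing Implicit Defensive.

Definition parts n := undup [seq s <- cands n | is_partition n s].

Lemma uniq_parts n : uniq (parts n).
Proof. exact: undup_uniq. Qed.

Lemma sumn_ge_size s : all (fun x => 0 < x) s -> size s <= sumn s.
Proof. elim: s => //= x s IH /andP[hx hs]; have := IH hs; lia. Qed.

Lemma mem_le_sumn s x : x \in s -> x <= sumn s.
Proof. elim: s => //= y s IH; rewrite inE => /orP[/eqP->|/IH]; lia. Qed.

Lemma cands_complete n s : is_partition n s -> s \in cands n.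
Proof.
case/and3P=> _ hpos /eqP hsum.
have hsz : size s <= n by rewrite -hsum sumn_ge_size.
have hle : forall x, x \in s -> x <= n by move=> x /mem_le_sumn; rewrite hsum.
set s' := [seq (inord x : 'I_n.+1) | x <- s].
have hs' : map (@nat_of_ord _) s' = s.
  rewrite -map_comp -[RHS]map_id; apply/eq_in_map => x /hle hx /=.
  by rewrite inordK.
apply/flatten_mapP; exists (size s); first by rewrite mem_iota; lia.
have -> : size s = size s' by rewrite size_map.
apply/mapP; exists (in_tuple s'); first by rewrite mem_enum.
by rewrite /= hs'.
Qed.

Lemma mem_parts n s : (s \in parts n) = is_partition n s.
Proof.
rewrite mem_undup mem_filter; case: (boolP (is_partition n s)) => //= H.
exact: cands_complete.
Qed.

Lemma p_count A a n :
  p A a n = count (fun s => mex A a s == a %[mod A.*2]) (parts n).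
Proof.
rewrite /p /parts -size_filter filter_undup -filter_predI.
congr (size (undup _)); apply: eq_filter => s /=; by rewrite andbC.
Qed.
Definition mi A a (s : seq nat) := find (fun i => a + A * i \notin s) (iota 0 (size s).+1).

Lemma mi_le A a s : 0 < A -> mi A a s <= size s.
Proof.
move=> hA; rewrite /mi.
have : has (fun i => a + A * i \notin s) (iota 0 (size s).+1).
  apply/negPn/negP => /hasPn hall.
  have hu : uniq [seq a + A * i | i <- iota 0 (size s).+1].
    rewrite map_inj_uniq ?iota_uniq // => x y /eqP; rewrite eqn_add2l eqn_pmul2l //; exact/eqP.
  have := uniq_leq_size hu; rewrite size_map size_iota; move=> H.
  suff : (size s).+1 <= size s by lia.
  apply: H.
  move=> x /mapP[i hi ->]; by move: (hall i hi) => /= /negPn.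
by rewrite has_find size_iota.
Qed.

Lemma mi_before A a s j : 0 < A -> j < mi A a s -> a + A * j \in s.
Proof.
move=> hA hj; have := before_find 0 hj.
have hlt : j < (size s).+1 by have := mi_le a s hA; lia.
by rewrite nth_iota // add0n /= => /negPn.
Qed.

Lemma mi_at A a s : 0 < A -> a + A * mi A a s \notin s.
Proof.
move=> hA; have hle := mi_le a s hA.
have : has (fun i => a + A * i \notin s) (iota 0 (size s).+1).
  by rewrite has_find size_iota; move: hle; rewrite /mi; lia.
move/(nth_find 0); rewrite -/(mi A a s) nth_iota //; lia.
Qed.

Lemma mi_leP A a s i : 0 < A ->
  (i <= mi A a s) = all (fun j => a + A * j \in s) (iota 0 i).
Proof.
move=> hA; apply/idP/allP.
  move=> hi j; rewrite mem_iota => hj; apply: mi_before => //; lia.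
move=> H; rewrite leqNgt; apply/negP => hlt.
have := H (mi A a s); rewrite mem_iota add0n hlt leq0n => /(_ isT).
by move/negP: (mi_at a s hA).
Qed.

Lemma mexE A a s : 0 < a <= A -> mex A a s = a + A * mi A a s.
Proof.
case/andP=> ha haA; have hA : 0 < A by lia.
set x0 := a + A * mi A a s.
set L := [seq j <- iota 1 (a + A * (size s).+1) | (j == a %[mod A]) && (j \notin s)].
have hx0 : x0 \in L.
  have hm : (a + A * mi A a s) %% A = a %% A by rewrite addnC mulnC modnMDl.
  rewrite mem_filter mem_iota mi_at // andbT /x0 hm eqxx /=.
  have := mi_le a s hA; nia.
have hmin : forall y, y \in L -> x0 <= y.
  move=> y; rewrite mem_filter mem_iota => /andP[/andP[hy hys] /andP[hy1 hyr]].
  have hya : a <= y.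
    rewrite leqNgt; apply/negP => hlt.
    move: hy; rewrite (modn_small (m:=y)); last by lia.
    case: (ltngtP a A) haA => // [hlt2|heq] _.
      by rewrite modn_small // => /eqP; lia.
    by rewrite heq modnn => /eqP; lia.
  move: hy; rewrite (eqn_mod_dvd _ hya) => /dvdnP[q hq].
  have hyq : y = a + A * q by lia.
  have : mi A a s <= q.
    rewrite leqNgt; apply/negP => /(mi_before hA).
    by rewrite -hyq (negbTE hys).
  rewrite /x0; nia.
rewrite /mex -/L.
have hs : sorted ltn L by apply: sorted_filter; [exact: ltn_trans | exact: iota_ltn_sorted].
case: L hx0 hmin hs => [//|h L'] hx0 hmin hs /=.
have hh := hmin h (mem_head _ _).
move: hx0; rewrite inE => /orP[/eqP <-//|hin].
have := order_path_min ltn_trans hs => /allP /(_ _ hin); lia.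
Qed.

Lemma mexcond A a s : 0 < a <= A ->
  (mex A a s == a %[mod A.*2]) = ~~ odd (mi A a s).
Proof.
move=> h; have hA : 0 < A by case/andP: h; lia.
rewrite mexE //.
have -> : a %% A.*2 = (a + 0) %% A.*2 by rewrite addn0.
rewrite eqn_modDl mod0n -muln2 -/(dvdn _ _).
by rewrite dvdn_pmul2l // dvdn2.
Qed.

Definition E A a i := [seq a + A * j | j <- iota 0 i].
Definition e A a i := sumn (E A a i).
Definition ins (E : seq nat) (l : seq nat) := sort geq (E ++ l).

Lemma geq_trans : transitive geq.
Proof. move=> x y z /= h1 h2; exact: leq_trans h2 h1. Qed.
Lemma geq_anti : antisymmetric geq.
Proof. move=> x y /andP[h1 h2]; apply/eqP; rewrite eqn_leq; apply/andP; split; [exact: h2|exact: h1]. Qed.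
Lemma geq_tot : total geq.
Proof. move=> x y; exact: leq_total. Qed.

Lemma perm_sortG (s : seq nat) : perm_eq (sort geq s) s.
Proof. by rewrite perm_sort. Qed.

Lemma uniq_E A a i : 0 < A -> uniq (E A a i).
Proof.
move=> hA; rewrite map_inj_uniq ?iota_uniq // => x y /eqP.
rewrite eqn_add2l eqn_pmul2l //; exact/eqP.
Qed.

Lemma subperm_ex (E0 s : seq nat) : uniq E0 -> {subset E0 <= s} ->
  exists r, perm_eq s (E0 ++ r).
Proof.
elim: E0 s => [|x E0 IH] s /=; first by move=> _ _; exists s.
case/andP=> hx hu hsub.
have hxs : x \in s by apply: hsub; exact: mem_head.
have hp := perm_to_rem hxs.
have [r hr] : exists r, perm_eq (rem x s) (E0 ++ r).
  apply: IH => // y hy.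
  have : y \in x :: rem x s by rewrite -(perm_mem hp); apply: hsub; rewrite inE hy orbT.
  rewrite inE => /orP[/eqP hyx|//]; by move: hx; rewrite -hyx hy.
exists r; apply: (perm_trans hp); by rewrite /= perm_cons.
Qed.

Lemma sumn_cat' (s1 s2 : seq nat) : sumn (s1 ++ s2) = sumn s1 + sumn s2.
Proof. by elim: s1 => //= x s IH; rewrite IH addnA. Qed.

Lemma E_pos A a i : 0 < a -> all (fun x => 0 < x) (E A a i).
Proof. move=> ha; apply/allP => x /mapP[j _ ->]; lia. Qed.

Lemma mi_le_n A a n s : 0 < A -> is_partition n s -> mi A a s <= n.
Proof.
move=> hA /and3P[_ hpos /eqP hs]; have := mi_le a s hA; have := sumn_ge_size hpos; lia.
Qed.

Lemma ins_part A a i n l : 0 < a -> is_partition (n - e A a i) l -> e A a i <= n ->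
  is_partition n (ins (E A a i) l).
Proof.
move=> ha /and3P[_ hpos /eqP hs] hle; rewrite /is_partition sort_sorted /=; last exact: geq_tot.
have hp := perm_sortG (E A a i ++ l).
rewrite (perm_all _ hp) all_cat E_pos //= hpos /=.
by rewrite (perm_sumn hp) sumn_cat' hs -/(e A a i); apply/eqP; lia.
Qed.

Lemma count_mi A a i n : 0 < a <= A -> e A a i <= n ->
  count (fun s => i <= mi A a s) (parts n) = size (parts (n - e A a i)).
Proof.
case/andP=> ha haA hle; have hA : 0 < A by lia.
set Ei := E A a i.
have hinj : {in parts (n - e A a i) &, injective (ins Ei)}.
  move=> l1 l2; rewrite !mem_parts => /and3P[h1 _ _] /and3P[h2 _ _] heq.
  apply: (sorted_eq geq_trans geq_anti h1 h2).
  rewrite -(perm_cat2l Ei).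
  have h1' : perm_eq (Ei ++ l1) (sort geq (Ei ++ l1)) by rewrite perm_sym perm_sortG.
  apply: (perm_trans h1'); move: heq; rewrite /ins => ->; exact: perm_sortG.
rewrite -size_filter -[in RHS](size_map (ins Ei)).
apply/perm_size/uniq_perm; first by apply: filter_uniq; exact: uniq_parts.
  by rewrite (map_inj_in_uniq hinj) uniq_parts.
move=> mu; rewrite mem_filter mem_parts (mi_leP _ _ _ hA); apply/idP/mapP.
  case/andP=> /allP hall hmu.
  have hsub : {subset Ei <= mu} by move=> x /mapP[j hj ->]; exact: hall.
  have [r hr] := subperm_ex (uniq_E a i hA) hsub.
  case/and3P: hmu => hsort hpos /eqP hsum.
  exists (sort geq r).
    rewrite mem_parts /is_partition sort_sorted /=; last exact: geq_tot.
    rewrite (perm_all _ (perm_sortG _)) (perm_sumn (perm_sortG _)).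
    move: hpos; rewrite (perm_all _ hr) all_cat => /andP[_ ->] /=.
    move: hsum; rewrite (perm_sumn hr) sumn_cat' -/(e A a i) => <-; apply/eqP; lia.
  apply: (sorted_eq geq_trans geq_anti hsort); first by rewrite sort_sorted //; exact: geq_tot.
  apply: (perm_trans hr); rewrite perm_sym; apply: (perm_trans (perm_sortG _)).
  by rewrite perm_cat2l perm_sort.
case=> l; rewrite mem_parts => hl ->.
rewrite ins_part //= andbT; apply/allP => j hj.
rewrite (perm_mem (perm_sortG _)) mem_cat; apply/orP; left; exact: map_f.
Qed.

Lemma e_ge A a i : 0 < a -> i <= e A a i.
Proof.
move=> ha; rewrite /e /E; elim: i => [//|i IH].
rewrite -[i.+1]addn1 iotaD map_cat sumn_cat' /=; lia.
Qed.

Lemma count_mi0 A a i n : 0 < a <= A -> n < e A a i ->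
  count (fun s => i <= mi A a s) (parts n) = 0.
Proof.
case/andP=> ha haA hlt; have hA : 0 < A by lia.
apply/eqP; rewrite -leqn0 leqNgt -has_count; apply/hasPn => s.
rewrite mem_parts (mi_leP _ _ _ hA) => /and3P[_ _ /eqP hs]; apply/negP => /allP hall.
have hsub : {subset E A a i <= s} by move=> x /mapP[j hj ->]; exact: hall.
have [r hr] := subperm_ex (uniq_E a i hA) hsub.
move: hs; rewrite (perm_sumn hr) sumn_cat' -/(e A a i); lia.
Qed.

Lemma odd_count_sum T (f : T -> nat) (L : seq T) :
  odd (count (fun s => ~~ odd (f s)) L) = odd (\sum_(s <- L) (f s).+1).
Proof.
elim: L => [|x L IH]; first by rewrite big_nil.
by rewrite big_cons /= oddD IH oddD; case: (odd (f x)) (odd (\sum_(j <- L) (f j).+1)) => [] [].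
Qed.

Lemma sum_le_iota k n : k <= n -> \sum_(i <- iota 0 n.+1) (i <= k) = k.+1.
Proof.
move=> hk.
have -> : \sum_(i <- iota 0 n.+1) (i <= k) = \sum_(i <- iota 0 n.+1 | i <= k) 1.
  by rewrite [RHS]big_mkcond; apply: eq_bigr => i _; case: (i <= k).
rewrite sum1_count.
have -> : n.+1 = k.+1 + (n - k) by lia.
rewrite iotaD count_cat.
have -> : count (fun i => i <= k) (iota 0 k.+1) = k.+1.
  by rewrite (eq_in_count (a2 := predT)) ?count_predT ?size_iota // => x; rewrite mem_iota /= => hx; case: leqP => // h; lia.
rewrite (eq_in_count (a2 := pred0)) ?count_pred0 ?addn0 // => x; rewrite mem_iota /= => hx; case: leqP => // h; lia.
Qed.

Lemma c_parity A a n : 0 < a <= A ->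
  odd (p A a n) = odd (\sum_(i <- iota 0 n.+1 | e A a i <= n) size (parts (n - e A a i))).
Proof.
move=> h; have hA : 0 < A by case/andP: h; lia.
rewrite p_count (eq_count (a2 := fun s => ~~ odd (mi A a s))); last by move=> s; exact: mexcond.
rewrite odd_count_sum.
rewrite (eq_big_seq (fun s => \sum_(i <- iota 0 n.+1) (i <= mi A a s))); last first.
  move=> s; rewrite mem_parts => hs; rewrite sum_le_iota //; exact: mi_le_n hs.
rewrite exchange_big /= [in RHS]big_mkcond /=; congr odd; apply: eq_bigr => i _.
case: leqP => hle.
  rewrite -(count_mi h hle) -sum1_count [RHS]big_mkcond /=; apply: eq_bigr => s _; by case: (i <= _).
rewrite -[RHS](count_mi0 h hle) -sum1_count [RHS]big_mkcond /=; apply: eq_bigr => s _; by case: (i <= _).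
Qed.

Definition pent (j : int) : nat :=
  match j with Posz k => (k * (3 * k + 1))./2 | Negz k => (k.+1 * (3 * k + 2))./2 end.

Lemma pentE j : ((pent j)%:Z * 2 = j * (3 * j + 1))%R.
Proof.
case: j => k /=.
  have h := odd_double_half (k * (3 * k + 1)).
  have ho : odd (k * (3 * k + 1)) = false by rewrite oddM oddD oddM /=; case: (odd k).
  move: h; rewrite ho /= add0n -muln2; set y := _./2; lia.
have h := odd_double_half (k.+1 * (3 * k + 2)).
have ho : odd (k.+1 * (3 * k + 2)) = false by rewrite oddM oddD oddM /=; case: (odd k).
move: h; rewrite ho /= add0n -muln2 NegzE; set y := _./2; lia.
Qed.

Definition bz (x : int * seq nat) : int * seq nat :=
  let: (j, l) := x in
  if (if l is [::] then (0 < j)%R else ((head 0 l)%:Z <= (size l)%:Z + 3 * j)%R) then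
    ((j - 1)%R, [seq y <- absz ((size l)%:Z + 3 * j - 1)%R :: map predn l | 0 < y])
  else
    ((j + 1)%R, map succn (behead l) ++
       nseq (absz ((head 0 l)%:Z - 3 * j - (maxn (size l) 1)%:Z - 1)%R) 1).

Definition inY M (x : int * seq nat) := let: (j, l) := x in
  (pent j <= M) && is_partition (M - pent j) l.

Lemma headP (l : seq nat) : sorted geq l -> forall y, y \in l -> y <= head 0 l.
Proof.
case: l => //= x l' hs y; rewrite inE => /orP[/eqP->//|hy].
by have := order_path_min geq_trans hs => /allP /(_ y hy).
Qed.

Lemma sumn_filter_pos (s : seq nat) : sumn [seq y <- s | 0 < y] = sumn s.
Proof. by elim: s => //= y s IH; case: y => //= y; rewrite IH. Qed.

Lemma sumn_predn (l : seq nat) : all (fun x => 0 < x) l -> sumn (map predn l) + size l = sumn l.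
Proof. elim: l => //= y s IH /andP[hy /IH]; lia. Qed.

Lemma ones (l : seq nat) : all (fun y => y <= 1) l -> all (fun x => 0 < x) l ->
  l = nseq (size l) 1 /\ [seq y <- map predn l | 0 < y] = [::].
Proof.
elim: l => //= y s IH /andP[hy1 hs1] /andP[hy0 hs0].
have [h1 h2] := IH hs1 hs0; have -> : y = 1 by lia.
by split; [rewrite {1}h1 | rewrite /= h2].
Qed.

Lemma recon (l : seq nat) : sorted geq l -> all (fun x => 0 < x) l ->
  map succn [seq y <- map predn l | 0 < y] ++
    nseq (size l - size [seq y <- map predn l | 0 < y]) 1 = l.
Proof.
elim: l => //= x l IH hs /andP[hx hl].
have hs' : sorted geq l := path_sorted hs.
case: x hs hx => // [[|x]] hs _ /=.
  have hle : all (fun y => y <= 1) l.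
    apply/allP => y hy; have := order_path_min geq_trans hs => /allP /(_ y hy) /=; lia.
  have [h1 h2] := ones hle hl; by rewrite h2 /= ?subn0 [in RHS]h1.
by rewrite -[in RHS](IH hs' hl).
Qed.

Lemma filter_nseq0 c : [seq y <- nseq c 0 | 0 < y] = [::].
Proof. by elim: c. Qed.

Lemma L5 (l' : seq nat) c : all (fun x => 0 < x) l' ->
  [seq y <- map predn (map succn l' ++ nseq c 1) | 0 < y] = l'.
Proof.
move=> hp; rewrite map_cat filter_cat.
have -> : map predn (nseq c 1) = nseq c 0 by rewrite map_nseq.
rewrite filter_nseq0 cats0 -map_comp map_id_in //= ?(all_filterP hp) //.
Qed.

Lemma sorted_succ_ones (l' : seq nat) c : sorted geq l' ->
  sorted geq (map succn l' ++ nseq c 1).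
Proof.
have hn : forall k, sorted geq (nseq k 1) by case=> //= k; elim: k => //= k ->; rewrite leqnn.
elim: l' => [|x l' IH] /=; first by move=> _; exact: hn.
move=> hs; rewrite path_sortedE; last exact: geq_trans.
rewrite IH ?andbT; last exact: path_sorted hs.
rewrite all_cat; apply/andP; split.
  apply/allP => y /mapP[z hz ->] /=; have := order_path_min geq_trans hs => /allP /(_ z hz) /=; lia.
by apply/allP => y; rewrite mem_nseq => /andP[_ /eqP ->].
Qed.

Lemma sorted_nseq1 k : sorted geq (nseq k 1).
Proof. by case: k => //= k; elim: k => //= k ->; rewrite leqnn. Qed.
Lemma sumn_nseq1 k : sumn (nseq k 1) = k.
Proof. by elim: k => //= k ->; lia. Qed.
Lemma all_nseq1 k : all (fun x => 0 < x) (nseq k 1).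
Proof. by elim: k. Qed.
Lemma sumn_map_succ (s : seq nat) : sumn (map succn s) = sumn s + size s.
Proof. by elim: s => //= x s ->; lia. Qed.
Lemma size_fp (s : seq nat) : size [seq y <- map predn s | 0 < y] <= size s.
Proof. by rewrite size_filter -[X in _ <= X](size_map predn) count_size. Qed.

Lemma bzE j h (l' : seq nat) : bz (j, h :: l') =
  if (h%:Z <= (size l').+1%:Z + 3 * j)%R then
    ((j - 1)%R, [seq y <- absz ((size l').+1%:Z + 3 * j - 1)%R :: map predn (h :: l') | 0 < y])
  else ((j + 1)%R, map succn l' ++ nseq (absz (h%:Z - 3 * j - (size l').+1%:Z - 1)%R) 1).
Proof.
have hm : maxn (size l').+1 1 = (size l').+1 by lia.
by rewrite /bz /= hm.
Qed.

Lemma bz_in M x : 0 < M -> inY M x -> inY M (bz x).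
Proof.
move=> hM; case: x => j l /andP[hpj /and3P[hs hpos /eqP hsum]].
have hpe := pentE j; have hpe1 := pentE (j - 1); have hpe2 := pentE (j + 1).
case: l hs hpos hsum => [|h l'] hs hpos hsum.
  move: hsum => /= hsum; rewrite /bz /=; case: ifP => hj.
    have hz : 0 < absz (0%:Z + 3 * j - 1)%R by lia.
    rewrite /= hz /inY /is_partition /= hz; apply/and3P; split => //; [|apply/eqP]; lia.
  move/negbT: hj => hj.
  have hj0 : j != 0%R by apply/negP => /eqP hj0; subst j; move: hsum hpj => /=; lia.
  rewrite /inY /is_partition sorted_nseq1 all_nseq1 sumn_nseq1 /=.
  apply/andP; split; [|apply/eqP]; lia.
rewrite bzE; set l := h :: l' in hs hpos hsum *.
have hh : forall y, y \in l -> y <= h := headP hs.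
have hh1 : 0 < h by move: hpos => /andP[].
have hsp := sumn_predn hpos.
have hsz : size l = (size l').+1 by [].
case: ifP => hc.
  set z := absz _.
  have hz : (z%:Z = (size l').+1%:Z + 3 * j - 1)%R by rewrite /z; lia.
  have hsw : sorted geq [seq y <- z :: map predn l | 0 < y].
    apply: sorted_filter; first exact: geq_trans.
    change (path geq z (map predn l)); rewrite path_sortedE; last exact: geq_trans.
    apply/andP; split.
      apply/allP => y /mapP[x hx ->] /=; have := hh x hx; lia.
    by apply: (@homo_sorted _ _ predn geq geq _ l hs) => x y /=; lia.
  rewrite /inY /is_partition hsw filter_all sumn_filter_pos.
  have -> : sumn (z :: map predn l) = z + sumn (map predn l) by [].
  apply/andP; split; [|apply/eqP]; lia.
move/negbT: hc => hc.
set c := absz _.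
have hcv : (c%:Z = h%:Z - 3 * j - (size l').+1%:Z - 1)%R by rewrite /c; lia.
have hs' : sorted geq l' := path_sorted hs.
have hp' : all (fun x => 0 < x) l' by move: hpos => /andP[].
rewrite /inY /is_partition sorted_succ_ones // all_cat all_nseq1 andbT /=.
have -> : all (fun x => 0 < x) (map succn l') by apply/allP => y /mapP[x _ ->].
rewrite sumn_cat' sumn_map_succ sumn_nseq1 /=; move: hsum; rewrite /l /= => hsum.
apply/andP; split; [|apply/eqP]; lia.
Qed.

Lemma bz_nil j : bz (j, [::]) = if (0 < j)%R then ((j - 1)%R, [seq y <- [:: absz (3 * j - 1)%R] | 0 < y])
  else ((j + 1)%R, nseq (absz (- 3 * j - 2)%R) 1).
Proof.
rewrite /bz /=; case: ifP => // _.
have -> : absz (0%:Z + 3 * j - 1)%R = absz (3 * j - 1)%R by congr absz; lia.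
by [].
have -> : absz (0%:Z - 3 * j - (maxn 0 1)%:Z - 1)%R = absz (- 3 * j - 2)%R by congr absz; lia.
by [].
Qed.

Lemma bz_inv M x : 0 < M -> inY M x -> bz (bz x) = x.
Proof.
move=> hM; case: x => j l /andP[hpj /and3P[hs hpos /eqP hsum]].
have hpe := pentE j.
case: l hs hpos hsum => [|h l'] hs hpos hsum.
  rewrite /= in hsum; rewrite bz_nil; case: ifP => hj.
    have hz : 0 < absz (3 * j - 1)%R by lia.
    have -> : [seq y <- [:: absz (3*j-1)%R] | 0 < y] = [:: absz (3 * j - 1)%R] by rewrite /= hz.
    rewrite bzE ifF; last by apply/negbTE; rewrite /=; lia.
    have -> : absz ((absz (3 * j - 1)%R)%:Z - 3 * (j - 1) - 1 - 1)%R = 0 by lia.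
    by rewrite subrK.
  move/negbT: hj => hj.
  have hj0 : j != 0%R by apply/negP => /eqP hj0; subst j; move: hsum hpj => /=; lia.
  have [c hc] : exists c, absz (- 3 * j - 2)%R = c.+1 by exists (absz (- 3 * j - 2)%R).-1; lia.
  rewrite hc (_ : nseq c.+1 1 = 1 :: nseq c 1) // bzE ifT; last by rewrite size_nseq; lia.
  rewrite size_nseq.
  have -> : absz (c.+1%:Z + 3 * (j + 1) - 1)%R = 0 by lia.
  by rewrite /= map_nseq filter_nseq0 addrK.
rewrite bzE; set l := h :: l' in hs hpos hsum *.
have hh : forall y, y \in l -> y <= h := headP hs.
have hh1 : 0 < h by move: hpos => /andP[].
have hsp := sumn_predn hpos.
have hsz : size l = (size l').+1 by [].
case: ifP => hc.
  set z := absz _.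
  have hz : (z%:Z = (size l').+1%:Z + 3 * j - 1)%R by rewrite /z; lia.
  have hu : size [seq y <- map predn l | 0 < y] <= size l := size_fp l.
  case: (posnP z) => hz0.
    have -> : [seq y <- z :: map predn l | 0 < y] = [seq y <- map predn l | 0 < y] by rewrite [in LHS]/= hz0.
    have hle : all (fun y => y <= 1) l by apply/allP => y /hh; lia.
    have [h1 h2] := ones hle hpos.
    rewrite h2 bz_nil ifF; last by lia.
    have -> : absz (- 3 * (j - 1) - 2)%R = size l by lia.
    by rewrite subrK -h1.
  have -> : [seq y <- z :: map predn l | 0 < y] = z :: [seq y <- map predn l | 0 < y] by rewrite [in LHS]/= hz0.
  rewrite bzE ifF; last by apply/negbTE; lia.
  rewrite subrK.
  have -> : absz (z%:Z - 3 * (j - 1) - (size [seq y <- map predn l | (0 < y)%N]).+1%:Z - 1)%R =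
    size l - size [seq y <- map predn l | 0 < y] by lia.
  by rewrite recon.
move/negbT: hc => hc.
set c := absz _.
have hcv : (c%:Z = h%:Z - 3 * j - (size l').+1%:Z - 1)%R by rewrite /c; lia.
have hp' : all (fun x => 0 < x) l' by move: hpos => /andP[].
have hsv : size (map succn l' ++ nseq c 1) = size l' + c by rewrite size_cat size_map size_nseq.
have hallv : forall y, y \in map succn l' ++ nseq c 1 -> y <= h.+1.
  move=> y; rewrite mem_cat => /orP[/mapP[x hx ->]|]; last by rewrite mem_nseq => /andP[_ /eqP ->].
  have := hh x; rewrite /l inE hx orbT => /(_ isT); lia.
have hL5 := L5 c hp'.
case hv: (map succn l' ++ nseq c 1) => [|x v'].
  rewrite hv /= in hsv.
  have hl' : l' = [::] by apply/size0nil; lia.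
  rewrite bz_nil ifT; last by lia.
  have -> : absz (3 * (j + 1) - 1)%R = h by lia.
  by rewrite /= hh1 addrK /l hl'.
rewrite bzE ifT; last first.
  have := hallv x; rewrite hv mem_head => /(_ isT); move: hsv; rewrite hv /=; lia.
have -> : absz ((size v').+1%:Z + 3 * (j + 1) - 1)%R = h by move: hsv; rewrite hv /=; lia.
by rewrite -hv /= hh1 hL5 addrK.
Qed.

Lemma invol_even (T : eqType) (f : T -> T) (L : seq T) : uniq L ->
  {in L, forall x, f x \in L} -> {in L, forall x, f (f x) = x} ->
  {in L, forall x, f x != x} -> ~~ odd (size L).
Proof.
have [n] := ubnP (size L); elim: n L => // n IH [|x L] //= hsz hu hin hinv hne.
case/andP: hu => hxL hu.
have hfx : f x \in L.
  have := hin x (mem_head _ _); rewrite inE => /orP[/eqP h|//].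
  by have := hne x (mem_head _ _); rewrite h eqxx.
have hsr := size_rem hfx.
have hmem := mem_rem_uniq (f x) hu.
have hfxx : f (f x) = x := hinv x (mem_head _ _).
suff : ~~ odd (size (rem (f x) L)).
  rewrite hsr; case: L hfx {IH hsz hu hin hinv hne hxL hsr hmem} => //= y L _; by rewrite negbK.
apply: IH.
- rewrite hsr; move: hsz => /=; lia.
- exact: rem_uniq.
- move=> y; rewrite hmem => /andP[hy1 hy2].
  have hyx : y != x by apply/negP => /eqP hyx; move: hxL; rewrite -hyx hy2.
  have hyL : y \in x :: L by rewrite inE hy2 orbT.
  rewrite hmem; apply/andP; split.
    apply/negP => /eqP hfy; move: hyx; by rewrite -(hinv y hyL) hfy hfxx eqxx.
  have := hin y hyL; rewrite inE => /orP[/eqP hfy|//].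
  move: hy1; by rewrite -(hinv y hyL) hfy eqxx.
- move=> y; rewrite hmem => /andP[_ hy]; apply: hinv; by rewrite inE hy orbT.
- move=> y; rewrite hmem => /andP[_ hy]; apply: hne; by rewrite inE hy orbT.
Qed.

Definition Jr B : seq int := [seq (k%:Z - B%:Z)%R | k <- iota 0 (2 * B).+1].
Definition YL B M := flatten [seq [seq (j, l) | l <- parts (M - pent j)] | j <- [seq j <- Jr B | pent j <= M]].

Lemma mem_Jr B j : (j \in Jr B) = ((- B%:Z <= j)%R && (j <= B%:Z)%R).
Proof.
apply/mapP/idP.
  by case=> k; rewrite mem_iota => hk ->; lia.
move=> hj; exists (absz (j + B%:Z)%R); last by lia.
by rewrite mem_iota; lia.
Qed.

Lemma uniq_Jr B : uniq (Jr B).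
Proof. by rewrite map_inj_uniq ?iota_uniq // => x y /=; lia. Qed.

Lemma pent_bound j : (`|j| <= (pent j)%:Z)%R.
Proof. have := pentE j; case: (ler0P j) => hj; nia. Qed.

Lemma mem_YL B M x : M <= B -> (x \in YL B M) = inY M x.
Proof.
move=> hMB; case: x => j l; apply/flatten_mapP/idP.
  case=> j'; rewrite mem_filter => /andP[hj' _] /mapP[l' hl' [-> ->]].
  by rewrite /inY hj' -mem_parts.
case/andP=> hj hl; exists j.
  rewrite mem_filter hj mem_Jr /=; have := pent_bound j; lia.
by apply/mapP; exists l; rewrite ?mem_parts.
Qed.

Lemma uniq_YL B M : uniq (YL B M).
Proof.
rewrite /YL; have : uniq [seq j <- Jr B | pent j <= M] by apply: filter_uniq; exact: uniq_Jr.
elim: [seq j <- Jr B | pent j <= M] => //= j js IH /andP[hj hjs].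
rewrite cat_uniq IH // andbT; apply/andP; split.
  by rewrite map_inj_uniq ?uniq_parts // => x y [] ->.
apply/hasPn => x /flatten_mapP[j' hj' /mapP[l _ ->]]; apply/negP => /mapP[l' _ [hjj _]].
by move: hj; rewrite -hjj hj'.
Qed.

Lemma size_YL B M : size (YL B M) = \sum_(j <- Jr B | pent j <= M) size (parts (M - pent j)).
Proof.
rewrite /YL -big_filter; elim: [seq j <- Jr B | pent j <= M] => [|j js IH]; first by rewrite big_nil.
by rewrite big_cons /= size_cat size_map IH.
Qed.

Lemma YL_even B M : 0 < M <= B ->
  ~~ odd (\sum_(j <- Jr B | pent j <= M) size (parts (M - pent j))).
Proof.
case/andP=> hM hMB; rewrite -size_YL; apply: (invol_even (f := bz)).
- exact: uniq_YL.
- by move=> x; rewrite !mem_YL //; exact: bz_in.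
- by move=> x; rewrite mem_YL //; exact: bz_inv.
- move=> [j l] _; rewrite /bz; case: ifP => _; apply/negP => /eqP [] /eqP; lia.
Qed.

Lemma odd_sum (I : Type) (r : seq I) (P : pred I) (F : I -> nat) :
  odd (\sum_(i <- r | P i) F i) = \big[addb/false]_(i <- r | P i) odd (F i).
Proof. exact: (big_morph odd oddD). Qed.

Lemma even_sum (I : Type) (r : seq I) (P : pred I) (F : I -> nat) :
  (forall i, P i -> ~~ odd (F i)) -> ~~ odd (\sum_(i <- r | P i) F i).
Proof.
move=> H; apply: (big_ind (fun x => ~~ odd x)) => // x y hx hy.
by rewrite oddD (negbTE hx) (negbTE hy).
Qed.

Lemma p0 A a : 0 < a <= A -> odd (p A a 0).
Proof.
move=> h; have hA : 0 < A by case/andP: h; lia.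
have hp : perm_eq (parts 0) [:: [::]].
  apply: uniq_perm => //; first exact: uniq_parts.
  move=> s; rewrite mem_parts inE; apply/idP/eqP => [|->//].
  case/and3P=> _ hpos /eqP hs; have := sumn_ge_size hpos; rewrite hs; case: s {hpos hs} => //.
rewrite p_count; move/permP: hp => ->; rewrite /= mexcond //.
Qed.

Lemma sum_iota_widen (F : nat -> nat) (g : nat -> nat) n N :
  (forall i, i <= g i) -> n <= N ->
  \sum_(i <- iota 0 n.+1 | g i <= n) F i = \sum_(i <- iota 0 N.+1 | g i <= n) F i.
Proof.
move=> hg hn.
have -> : N.+1 = n.+1 + (N - n) by lia.
rewrite iotaD big_cat /= [X in _ = _ + X]big1_seq; first by rewrite addn0.
move=> i /andP[hi]; rewrite mem_iota => hi2; have := hg i; lia.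
Qed.

Lemma eE A a i : 2 * e A a i = 2 * a * i + A * i * (i - 1).
Proof.
rewrite /e /E; elim: i => [|i IH]; first by rewrite /=; lia.
rewrite -[i.+1]addn1 iotaD map_cat sumn_cat' /=; nia.
Qed.

Lemma pent_key r N j : 2 <= r -> N * 2 = r * (3 * r - 1) ->
  j != (- r%:Z)%R -> pent j <= N -> pent j + (2 * r - 1) <= N.
Proof.
move=> hr hN hj hpj; have hp := pentE j.
have h2 : ((pent j)%:Z * 2 <= r%:Z * (3 * r%:Z - 1))%R by lia.
have hlt : (j < r%:Z)%R.
  case: (boolP (j < r%:Z)%R) => // hge.
  have : (r%:Z * (3 * r%:Z + 1) <= j * (3 * j + 1))%R by nia.
  lia.
have hgt : (- r%:Z < j)%R.
  case: (boolP (- r%:Z < j)%R) => // hle.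
  have hle' : (j <= - r%:Z - 1)%R by move: hj hle => /eqP; lia.
  have : ((r%:Z + 1) * (3 * r%:Z + 2) <= j * (3 * j + 1))%R by nia.
  lia.
have : (j * (3 * j + 1) <= (r%:Z - 1) * (3 * r%:Z - 2))%R by nia.
lia.
Qed.

Theorem lemma2p3 (t m r : nat) (ht : 0 < t) (hm : 0 < m) (hr : 2 <= r) :
  (forall k : nat, 0 < k ->
     ((r * (3 * r - 1))%:Z !=
      ((m%:Z * k%:Z ^+ 2 - (m%:Z - 2) * k%:Z) * t%:Z))%R) ->
  exists n : nat,
    (2 * r - 1 <= n <= r * (3 * r - 1) %/ 2) && odd (p (m * t) t n).
Proof.
move=> hyp.
have hev : forall r', ~~ odd (r' * (3 * r' - 1)).
  case=> // s; have -> : 3 * s.+1 - 1 = 3 * s + 2 by lia.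
  by rewrite oddM oddD oddM /=; case: (odd s).
have hN2 : r * (3 * r - 1) %/ 2 * 2 = r * (3 * r - 1) by rewrite divnK // dvdn2.
set N := r * (3 * r - 1) %/ 2 in hN2 *.
set A := m * t.
have ha : 0 < t <= A by apply/andP; split; [|rewrite /A; nia].
have hNr : 2 * r - 1 <= N by nia.
case: (boolP (has (fun n => odd (p A t n)) (iota (2 * r - 1) (N - (2 * r - 1)).+1))) => [/hasP[n hn hodd]|hnone].
  exists n; rewrite hodd andbT; move: hn; rewrite mem_iota; lia.
exfalso.
have heven : forall n, 2 * r - 1 <= n <= N -> ~~ odd (p A t n).
  move=> n hn; apply: (hasPn hnone); rewrite mem_iota; lia.
set S := \sum_(j <- Jr N | pent j <= N) p A t (N - pent j).
have hS1 : odd S.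
  have hin : (- r%:Z)%R \in Jr N by rewrite mem_Jr; lia.
  have hpr : pent (- r%:Z)%R = N by have := pentE (- r%:Z)%R; nia.
  rewrite /S big_mkcond (bigD1_seq _ hin (uniq_Jr N)) /= hpr leqnn subnn oddD (p0 ha) /=.
  apply: even_sum => j hj; case: ifP => hpj //; apply: heven.
  have := pent_key hr hN2 hj hpj; lia.
have hne : forall i, e A t i != N.
  case=> [|i]; first by rewrite /e /=; lia.
  apply/negP => /eqP heq; move/eqP: (hyp i.+1 isT); apply.
  have := eE A t i.+1; rewrite heq /A subSS subn0 => h2.
  rewrite expr2; nia.
have hS0 : ~~ odd S.
  rewrite /S odd_sum.
  rewrite (eq_bigr (fun j => odd (\sum_(i <- iota 0 N.+1 | e A t i <= N - pent j)
      size (parts (N - pent j - e A t i))))); last first.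
    move=> j hj; rewrite (c_parity _ ha) (@sum_iota_widen _ (e A t) _ N) //; last by lia.
    move=> i; apply: e_ge; lia.
  rewrite -odd_sum.
  have -> : \sum_(j <- Jr N | pent j <= N) \sum_(i <- iota 0 N.+1 | e A t i <= N - pent j)
      size (parts (N - pent j - e A t i)) =
    \sum_(i <- iota 0 N.+1 | e A t i <= N) \sum_(j <- Jr N | pent j <= N - e A t i)
      size (parts (N - e A t i - pent j)).
    transitivity (\sum_(j <- Jr N) \sum_(i <- iota 0 N.+1)
      (if (pent j <= N) && (e A t i <= N - pent j) then size (parts (N - pent j - e A t i)) else 0)).
      rewrite big_mkcond; apply: eq_bigr => j _; case: ifP => hj.
        rewrite big_mkcond; apply: eq_bigr => i _; by case: ifP.
      by rewrite big1.
    rewrite exchange_big [RHS]big_mkcond; apply: eq_bigr => i _; case: ifP => hi.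
      rewrite [RHS]big_mkcond; apply: eq_bigr => j _.
      have -> : (pent j <= N) && (e A t i <= N - pent j) = (pent j <= N - e A t i).
        by apply/andP/idP => [[h1 h2]|h]; [|split]; lia.
      case: ifP => // _; congr (size (parts _)); lia.
    move/negbT: hi => hi; apply: big1 => j _; case: ifP => // /andP[h1 h2]; lia.
  apply: even_sum => i hi; apply: YL_even.
  have := hne i; move/eqP: hi => hi; lia.
by rewrite hS1 in hS0.
Qed.
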